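(* Let $X \in \mathbb{R}^{n\times p}$, let $k$ be a positive integer, let $A \in \mathbb{R}^{p\times k}$ satisfy $A^T A = I_k$, and let $\lambda, \lambda_1 > 0$. Let $B \in \mathbb{R}^{p\times k}$ be a minimizer of the convex function $$B \mapsto \|X - X B A^T\|_F^2 + \lambda \|B\|_F^2 + \lambda_1 \sum_{i=1}^p \|B_{(i)}\|_2 .$$ For $i = 1,\ldots,p$ define $b_i = \sum_{j\neq i} \big(X^{(j)T} X^{(i)}\big) B_{(j)}^T \in \mathbb{R}^{k}$. Then for each $i$, $B_{(i)} = 0$ if and only if $\|A^T X^T X^{(i)} - b_i\|_2 \le \lambda_1/2$.
   Context: For a matrix $M$, $M_{(i)}$ denotes its $i$-th row (as a row vector) and $M^{(i)}$ its $i$-th column. $\|\cdot\|_F$ is the Frobenius norm and $\|\cdot\|_2$ the Euclidean norm; $I_k$ is the $k\times k$ identity matrix. *)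

(* Defs.v *)
From HB Require Import structures.
From mathcomp Require Import all_boot all_order all_algebra.
From mathcomp Require Import reals.
Set Implicit Arguments. Unset Strict Implicit. Unset Printing Implicit Defensive.
Import Order.TTheory GRing.Theory Num.Theory.
Local Open Scope ring_scope.

Definition frob2 (R : realType) (m n : nat) (M : 'M[R]_(m, n)) : R :=
  \sum_(i < m) \sum_(j < n) (M i j) ^+ 2.

Definition rnorm2 (R : realType) (n : nat) (v : 'rV[R]_n) : R :=
  Num.sqrt (\sum_(j < n) (v 0 j) ^+ 2).

Definition cnorm2 (R : realType) (n : nat) (v : 'cV[R]_n) : R :=
  Num.sqrt (\sum_(i < n) (v i 0) ^+ 2).

Definition spca_obj (R : realType) (n p k : nat) (X : 'M[R]_(n, p))
    (A : 'M[R]_(p, k)) (lam lam1 : R) (B : 'M[R]_(p, k)) : R :=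
  frob2 (X - X *m B *m A^T) + lam * frob2 B
  + lam1 * \sum_(i < p) rnorm2 (row i B).

Definition bvec (R : realType) (n p k : nat) (X : 'M[R]_(n, p))
    (B : 'M[R]_(p, k)) (i : 'I_p) : 'cV[R]_k :=
  \sum_(j < p | j != i) (((col j X)^T *m col i X) 0 0) *: (row j B)^T.

(* Main.v *)
Require Import Defs.
From HB Require Import structures.
From mathcomp Require Import all_boot all_order all_algebra.
From mathcomp Require Import reals.
From mathcomp Require Import ring lra.
Import Order.TTheory GRing.Theory Num.Theory.
Local Open Scope ring_scope.
Set Implicit Arguments. Unset Strict Implicit. Unset Printing Implicit Defensive.
Section Vec.
Variable R : realType.
Variable k : nat.
Implicit Types u v w d : 'rV[R]_k.

Definition dot u w : R := \sum_(j < k) u 0 j * w 0 j.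

Lemma dotC u w : dot u w = dot w u.
Proof. by apply: eq_bigr => j _; rewrite mulrC. Qed.
Lemma dotDl u v w : dot (u + v) w = dot u w + dot v w.
Proof. by rewrite /dot -big_split; apply: eq_bigr => j _; rewrite !mxE mulrDl. Qed.
Lemma dotDr u v w : dot w (u + v) = dot w u + dot w v.
Proof. by rewrite dotC dotDl !(dotC w). Qed.
Lemma dotZl a u w : dot (a *: u) w = a * dot u w.
Proof. by rewrite /dot mulr_sumr; apply: eq_bigr => j _; rewrite !mxE mulrA. Qed.
Lemma dotZr a u w : dot w (a *: u) = a * dot w u.
Proof. by rewrite dotC dotZl dotC. Qed.
Lemma dotNl u w : dot (- u) w = - dot u w.
Proof. by rewrite -scaleN1r dotZl mulN1r. Qed.
Lemma dotNr u w : dot w (- u) = - dot w u.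
Proof. by rewrite dotC dotNl dotC. Qed.
Lemma dot0l w : dot 0 w = 0.
Proof. by rewrite /dot big1 // => j _; rewrite mxE mul0r. Qed.
Lemma dot_ge0 u : 0 <= dot u u.
Proof. by apply: sumr_ge0 => j _; rewrite -expr2 sqr_ge0. Qed.
Lemma dot_eq0 u : dot u u = 0 -> u = 0.
Proof.
move=> /eqP; rewrite psumr_eq0 => [/allP H|j _]; last by rewrite -expr2 sqr_ge0.
apply/rowP => j; rewrite mxE; have := H j (mem_index_enum j).
by rewrite /= mulf_eq0 orbb => /eqP.
Qed.

Lemma cs u d : dot u d <= Num.sqrt (dot u u) * Num.sqrt (dot d d).
Proof.
set a := Num.sqrt (dot u u); set b := Num.sqrt (dot d d).
have ha : 0 <= a by apply: sqrtr_ge0.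
have hb : 0 <= b by apply: sqrtr_ge0.
have ea : a ^+ 2 = dot u u by rewrite sqr_sqrtr // dot_ge0.
have eb : b ^+ 2 = dot d d by rewrite sqr_sqrtr // dot_ge0.
have [a0|apos] := eqVneq a 0.
  have : dot u u = 0 by rewrite -ea a0 expr0n.
  by move/dot_eq0 => ->; rewrite dot0l a0 mul0r.
have [b0|bpos] := eqVneq b 0.
  have : dot d d = 0 by rewrite -eb b0 expr0n.
  by move/dot_eq0 => ->; rewrite dotC dot0l b0 mulr0.
have H := dot_ge0 (b *: u - a *: d).
rewrite !(dotDl, dotDr, dotZl, dotZr, dotNl, dotNr) -ea -eb (dotC d u) in H.
have ha' : 0 < a by rewrite lt_def apos.
have hb' : 0 < b by rewrite lt_def bpos.
have hab : 0 < a * b by apply: mulr_gt0.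
have : a * b * dot u d <= a * b * (a * b) by lra.
by rewrite ler_pM2l.
Qed.

Lemma vec_main (K l1 : R) (hK : 0 < K) (hl : 0 < l1) d v
  (G := fun u => K * dot u u - 2 * dot u d + l1 * Num.sqrt (dot u u))
  (hmin : forall u, G v <= G u) :
  v = 0 <-> Num.sqrt (dot d d) <= l1 / 2.
Proof.
split.
  move=> v0; subst v.
  set N := Num.sqrt (dot d d).
  have hN : 0 <= N by apply: sqrtr_ge0.
  have eN : dot d d = N ^+ 2 by rewrite sqr_sqrtr // dot_ge0.
  rewrite leNgt; apply/negP => hlt.
  have Npos : 0 < N by lra.
  set t := (2 * N - l1) / (2 * K * N).
  have tpos : 0 < t by apply: divr_gt0; [lra | apply: mulr_gt0 => //; lra].
  have es : Num.sqrt (dot (t *: d) (t *: d)) = t * N.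
    by rewrite dotZl dotZr mulrA -expr2 eN -exprMn sqrtr_sqr ger0_norm // mulr_ge0 // ltW.
  have := hmin (t *: d).
  rewrite /G es !(dotZl, dotZr, dot0l) sqrtr0 !mulr0 subr0 addr0 eN.
  have eKt : K * t * N = (2 * N - l1) / 2.
    rewrite /t; field; apply/andP; split; apply: lt0r_neq0 => //.
  move=> H.
  have : t * N * (K * t * N - 2 * N + l1) >= 0 by nra.
  rewrite eKt => H2.
  have : t * N > 0 by apply: mulr_gt0.
  nra.
move=> hd.
have := hmin 0.
rewrite /G !dot0l sqrtr0 !mulr0 subr0 addr0.
move=> H.
have hcs := cs v d.
set a := Num.sqrt (dot v v) in H hcs.
have ha : 0 <= a by apply: sqrtr_ge0.
have hv := dot_ge0 v.
have : K * dot v v <= 0 by nra.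
move=> H2; apply: dot_eq0; apply/eqP; rewrite eq_le hv andbT.
by rewrite -(pmulr_rle0 _ hK).
Qed.
End Vec.

Section Mat.
Variable R : realType.

Lemma frob2_tr m n (M : 'M[R]_(m, n)) : frob2 M = \tr (M^T *m M).
Proof.
rewrite /frob2 /mxtrace exchange_big; apply: eq_bigr => j _.
by rewrite mxE; apply: eq_bigr => l _; rewrite !mxE expr2.
Qed.

Lemma trTC m n (M N : 'M[R]_(m, n)) : \tr (M^T *m N) = \tr (N^T *m M).
Proof. by rewrite -mxtrace_tr trmx_mul trmxK. Qed.

Lemma frob2D m n (M N : 'M[R]_(m, n)) :
  frob2 (M + N) = frob2 M + 2 * \tr (M^T *m N) + frob2 N.
Proof.
rewrite !frob2_tr.
have -> : (M + N)^T = M^T + N^T by apply/matrixP => a b; rewrite !mxE.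
rewrite mulmxDl !mulmxDr !mxtraceD (trTC N M).
by rewrite mulr2n mulrDl mul1r !addrA.
Qed.

Lemma frob2N m n (M : 'M[R]_(m, n)) : frob2 (- M) = frob2 M.
Proof.
by apply: eq_bigr => j _; apply: eq_bigr => l _; rewrite mxE sqrrN.
Qed.

Lemma tr_row_col k (w : 'rV[R]_k) (y : 'cV[R]_k) : \tr (w *m y) = dot w y^T.
Proof. by rewrite trace_mx11 mxE /dot; apply: eq_bigr => j _; rewrite mxE. Qed.

Lemma delta11 : delta_mx 0 0 = 1%:M :> 'M[R]_1.
Proof. by apply/matrixP => a b; rewrite !mxE !ord1. Qed.

Lemma rnorm2_dot k (u : 'rV[R]_k) : rnorm2 u = Num.sqrt (dot u u).
Proof. by rewrite /rnorm2 /dot; congr Num.sqrt; apply: eq_bigr => j _; rewrite expr2. Qed.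

Lemma cnorm2_dot k (u : 'cV[R]_k) : cnorm2 u = Num.sqrt (dot u^T u^T).
Proof. by rewrite /cnorm2 /dot; congr Num.sqrt; apply: eq_bigr => j _; rewrite !mxE expr2. Qed.

Lemma mxtraceN m (M : 'M[R]_m) : \tr (- M) = - \tr M.
Proof. by rewrite /mxtrace -sumrN; apply: eq_bigr => j _; rewrite mxE. Qed.

Variables (n p k : nat) (X : 'M[R]_(n, p)) (A : 'M[R]_(p, k)).
Hypothesis hA : A^T *m A = 1%:M.

Lemma trAT m (M N : 'M[R]_(m, k)) : \tr ((M *m A^T)^T *m (N *m A^T)) = \tr (M^T *m N).
Proof.
rewrite trmx_mul trmxK -!mulmxA mxtrace_mulC -!mulmxA hA mulmx1 //.
Qed.

Lemma frob2AT m (M : 'M[R]_(m, k)) : frob2 (M *m A^T) = frob2 M.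
Proof. by rewrite !frob2_tr trAT. Qed.

Definition Q lam (B : 'M[R]_(p, k)) := frob2 (X - X *m B *m A^T) + lam * frob2 B.

Lemma Qdiff lam B D : Q lam (B + D) - Q lam B =
  2 * \tr ((X *m B)^T *m (X *m D)) - 2 * \tr (X^T *m (X *m D *m A^T))
  + frob2 (X *m D) + lam * (2 * \tr (B^T *m D) + frob2 D).
Proof.
have e : X - X *m (B + D) *m A^T = (X - X *m B *m A^T) + - (X *m D *m A^T).
  by rewrite mulmxDr mulmxDl opprD addrA.
rewrite /Q e !frob2D !frob2N !frob2AT.
have -> : (X - X *m B *m A^T)^T = X^T - (X *m B *m A^T)^T.
  by apply/matrixP => a b; rewrite !mxE.
rewrite mulmxBl !mulmxN !mxtraceN mxtraceD !mxtraceN opprK trAT.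
ring.
Qed.

Lemma trmxD' m l (M N : 'M[R]_(m, l)) : (M + N)^T = M^T + N^T.
Proof. by apply/matrixP => a b; rewrite !mxE. Qed.
Lemma trmxB' m l (M N : 'M[R]_(m, l)) : (M - N)^T = M^T - N^T.
Proof. by apply/matrixP => a b; rewrite !mxE. Qed.
Lemma trmxN' m l (M : 'M[R]_(m, l)) : (- M)^T = - M^T.
Proof. by apply/matrixP => a b; rewrite !mxE. Qed.
Lemma trmxZ' m l a (M : 'M[R]_(m, l)) : (a *: M)^T = a *: M^T.
Proof. by apply/matrixP => a' b; rewrite !mxE. Qed.

Lemma T1 (B : 'M[R]_(p, k)) i (w : 'rV[R]_k) :
  \tr ((X *m B)^T *m (X *m (delta_mx i 0 *m w))) = dot w (B^T *m (X^T *m col i X))^T.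
Proof. by rewrite colE trmx_mul !mulmxA mxtrace_mulC tr_row_col. Qed.

Lemma T2 i (w : 'rV[R]_k) :
  \tr (X^T *m (X *m (delta_mx i 0 *m w) *m A^T)) = dot w (A^T *m X^T *m col i X)^T.
Proof. by rewrite colE !mulmxA mxtrace_mulC !mulmxA mxtrace_mulC tr_row_col. Qed.

Lemma T3 i (w : 'rV[R]_k) :
  frob2 (X *m (delta_mx i 0 *m w)) = ((col i X)^T *m col i X) 0 0 * dot w w.
Proof.
rewrite (mulmxA X) -colE frob2_tr trmx_mul -mulmxA (mulmxA (col i X)^T).
rewrite [(col i X)^T *m col i X]mx11_scalar mul_scalar_mx -scalemxAr mxtraceZ.
by rewrite mxtrace_mulC tr_row_col trmxK -mx11_scalar.
Qed.

Lemma T4 (B : 'M[R]_(p, k)) i (w : 'rV[R]_k) :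
  \tr (B^T *m (delta_mx i 0 *m w)) = dot w (row i B).
Proof. by rewrite mulmxA mxtrace_mulC tr_row_col trmx_mul trmxK trmx_delta -rowE. Qed.

Lemma T5 i (w : 'rV[R]_k) : frob2 (delta_mx i 0 *m w : 'M[R]_(p, k)) = dot w w.
Proof.
rewrite frob2_tr trmx_mul trmx_delta -mulmxA (mulmxA (delta_mx 0 i)) mul_delta_mx.
by rewrite delta11 mul1mx mxtrace_mulC tr_row_col trmxK.
Qed.

Lemma bvecE (B : 'M[R]_(p, k)) i :
  B^T *m (X^T *m col i X) = bvec X B i + ((col i X)^T *m col i X) 0 0 *: (row i B)^T.
Proof.
rewrite /bvec (_ : _ + _ = \sum_(j < p) ((col j X)^T *m col i X) 0 0 *: (row j B)^T); last first.
  by rewrite [RHS](bigD1 i) //= addrC.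
apply/matrixP => l z; rewrite !mxE summxE; apply: eq_bigr => j _; rewrite !mxE mulrC.
congr (_ * _); apply: eq_bigr => m _; rewrite !mxE //.
Qed.

Lemma Sdiff (B : 'M[R]_(p, k)) i (w : 'rV[R]_k) :
  \sum_(j < p) rnorm2 (row j (B + delta_mx i 0 *m w)) =
  \sum_(j < p) rnorm2 (row j B) - rnorm2 (row i B) + rnorm2 (row i B + w).
Proof.
have hr : forall j, row j (B + delta_mx i 0 *m w) = if j == i then row i B + w else row j B.
  move=> j; apply/rowP => l; rewrite !mxE big_ord1 !mxE.
  have [->|ne] := eqVneq j i; first by rewrite eqxx /= mul1r !mxE.
  by rewrite /= mul0r addr0 mxE.
rewrite (bigD1 i) //= hr eqxx (eq_bigr (fun j => rnorm2 (row j B))); last first.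
  by move=> j /negbTE ji; rewrite hr ji.
rewrite [in RHS](bigD1 i) //=.
set a := rnorm2 _; set b := rnorm2 _; set S := \sum_(j | _) _.
ring.
Qed.
End Mat.

Unset Implicit Arguments.
Theorem claim1 (R : realType) (n p k : nat) (hk : (0 < k)%N)
    (X : 'M[R]_(n, p)) (A : 'M[R]_(p, k))
    (hA : A^T *m A = 1%:M)
    (lam lam1 : R) (hlam : 0 < lam) (hlam1 : 0 < lam1)
    (B : 'M[R]_(p, k))
    (hB : forall B' : 'M[R]_(p, k),
        spca_obj X A lam lam1 B <= spca_obj X A lam lam1 B')
    (i : 'I_p) :
  row i B = 0 <->
  cnorm2 (A^T *m X^T *m col i X - bvec X B i) <= lam1 / 2.
Proof.
set c : R := (((col i X)^T *m col i X) 0 0).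
set v := row i B.
set d := (A^T *m X^T *m col i X - bvec X B i)^T.
have hc : 0 <= c.
  by rewrite /c mxE; apply: sumr_ge0 => m _; rewrite mxE -expr2 sqr_ge0.
set G := fun u : 'rV[R]_k => (c + lam) * dot u u - 2 * dot u d + lam1 * Num.sqrt (dot u u).
have key : forall w, spca_obj X A lam lam1 (B + delta_mx i 0 *m w)
    - spca_obj X A lam lam1 B = G (v + w) - G v.
  move=> w.
  have -> : forall B0, spca_obj X A lam lam1 B0 = Q X A lam B0 + lam1 * \sum_(j < p) rnorm2 (row j B0) by [].
  rewrite opprD addrACA (Qdiff X hA) -mulrBr Sdiff.
  rewrite T1 T2 T3 T4 T5 bvecE /G /d -/v !rnorm2_dot.
  set s := Num.sqrt (dot (v + w) (v + w)).
  rewrite !(trmxD', trmxB', trmxN', trmxZ', trmxK).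
  rewrite !(dotDl, dotDr, dotZl, dotZr, dotNl, dotNr) (dotC v w).
  rewrite -/c.
  ring.
have hmin : forall u, G v <= G u.
  move=> u; have := hB (B + delta_mx i 0 *m (u - v)).
  by rewrite -subr_ge0 key (addrC v) subrK subr_ge0.
have hK : 0 < c + lam by lra.
have := @vec_main R k (c + lam) lam1 hK hlam1 d v hmin.
by rewrite cnorm2_dot.
Qed.
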